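(* Let $Z\in\mathbb{R}^{n\times m}$ and $w\in\mathbb{R}^n$ be fixed, let $\theta^*\in\mathbb{R}^m$ with $S^*=\operatorname{supp}(\theta^* )$, and set $y=Z\theta^*+w$. Let $\rho_\lambda$ satisfy Condition (R) and assume that for some $\delta\in(0,1)$, $$\frac1n|\langle w,Zu\rangle|\le\delta\Big[\frac{1}{2n}\|Zu\|_2^2+\rho_\lambda(u)\Big]\quad\text{for all }u\in\mathbb{R}^m.$$ Let $\xi=(1+\delta)/(1-\delta)$ and assume $\gamma^2:=\gamma^2_\rho(Z,S^*;\xi)>0$. Then every $\hat\theta\in\arg\min_{\theta\in\mathbb{R}^m}\frac{1}{2n}\|y-Z\theta\|_2^2+\rho_\lambda(\theta)$ satisfies $$\|\hat\theta-\theta^*\|_2\le\frac{2\xi}{\gamma^2}\rho_\lambda'(0^+)\|\theta^*\|_0^{1/2},\qquad\|\hat\theta-\theta^*\|_1\le\frac{2\xi(1+\xi)}{\gamma^2}\rho_\lambda'(0^+)\|\theta^*\|_0.$$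
   Context: $\rho_\lambda(u)=\sum_i\rho_\lambda(|u_i|)$ for vectors. Condition (R): $\rho_\lambda:[0,\infty)\to[0,\infty)$ is concave, nondecreasing, right-differentiable at $0$, $\rho_\lambda(0)=0$, $0<\rho_\lambda'(0^+)<\infty$ (right derivative at $0$), and there are constants $a,b\ge0$ independent of $\lambda$ with $\rho_\lambda(x)\ge\min\{a\lambda x,b\lambda^2\}$. For $A\subset[m]$ and $u\in\mathbb{R}^m$, $u_A$ denotes $u$ restricted to the coordinates in $A$. Cone: $\mathcal{C}_\rho(A,\xi)=\{u\in\mathbb{R}^m:\rho_\lambda(u_{A^c})\le\xi\rho_\lambda(u_A)\}$. Generalized restricted eigenvalue constant: $\gamma^2_\rho(Z,A;\xi)=\inf\{\|Zu\|_2^2/(n\|u\|_2^2):u\in\mathcal{C}_\rho(A,\xi),u\neq0\}$. *)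

(* Defs.v *)
From HB Require Import structures.
From mathcomp Require Import all_boot all_order all_algebra.
From mathcomp Require Import all_classical all_reals all_analysis.
Set Implicit Arguments. Unset Strict Implicit. Unset Printing Implicit Defensive.
Import Order.TTheory GRing.Theory Num.Theory.
Import numFieldNormedType.Exports.
Local Open Scope classical_set_scope.
Local Open Scope ring_scope.

Section Defs.
Variable R : realType.

Definition norm2 k (v : 'cV[R]_k) : R := Num.sqrt (\sum_i (v i 0) ^+ 2).
Definition norm1 k (v : 'cV[R]_k) : R := \sum_i `|v i 0|.
Definition supp k (v : 'cV[R]_k) : {set 'I_k} := [set i | v i 0 != 0].
Definition norm0 k (v : 'cV[R]_k) : nat := #|supp v|.
Definition dotv k (v w : 'cV[R]_k) : R := \sum_i v i 0 * w i 0.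

Definition pen (rho : R -> R) k (u : 'cV[R]_k) : R := \sum_i rho `|u i 0|.
Definition penA (rho : R -> R) k (A : {set 'I_k}) (u : 'cV[R]_k) : R :=
  \sum_(i in A) rho `|u i 0|.

Definition cone (rho : R -> R) k (A : {set 'I_k}) (xi : R) : set 'cV[R]_k :=
  [set u | penA rho (~: A) u <= xi * penA rho A u].

(* generalized restricted eigenvalue constant, as an extended real
   (infimum of the empty set is +oo) *)
Definition gamma2 (rho : R -> R) n m (Z : 'M[R]_(n, m)) (A : {set 'I_m}) (xi : R)
  : \bar R :=
  ereal_inf [set ((norm2 (Z *m u)) ^+ 2 / (n%:R * (norm2 u) ^+ 2))%:E
            | u in [set u | cone rho A xi u /\ u != 0]].

Definition rderiv0 (f : R -> R) (d : R) : Prop :=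
  (fun h => (f h - f 0) / h) @ 0^'+ --> d.

Definition condR (rho : R -> R -> R) : Prop :=
  (forall lam, 0 < lam ->
     (forall x, 0 <= x -> 0 <= rho lam x) /\
     (forall x y t, 0 <= x -> 0 <= y -> 0 <= t -> t <= 1 ->
        t * rho lam x + (1 - t) * rho lam y <= rho lam (t * x + (1 - t) * y)) /\
     (forall x y, 0 <= x -> x <= y -> rho lam x <= rho lam y) /\
     rho lam 0 = 0 /\
     (exists d, 0 < d /\ rderiv0 (rho lam) d)) /\
  (exists a b : R, 0 <= a /\ 0 <= b /\
     forall lam x, 0 < lam -> 0 <= x ->
       Num.min (a * lam * x) (b * lam ^+ 2) <= rho lam x).

End Defs.

(* Main.v *)
Require Import Defs.
From HB Require Import structures.
From mathcomp Require Import all_boot all_order all_algebra.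
From mathcomp Require Import all_classical all_reals all_analysis.
From mathcomp Require Import ring lra.
Import Order.TTheory GRing.Theory Num.Theory.
Import numFieldNormedType.Exports.
Local Open Scope classical_set_scope.
Local Open Scope ring_scope.

Section H.
Variable R : realType.
Variable r : R -> R.
Hypothesis Hpos : forall x : R, 0 <= x -> 0 <= r x.
Hypothesis Hconc : forall x y t : R, 0 <= x -> 0 <= y -> 0 <= t -> t <= 1 ->
        t * r x + (1 - t) * r y <= r (t * x + (1 - t) * y).
Hypothesis Hmono : forall x y : R, 0 <= x -> x <= y -> r x <= r y.
Hypothesis Hr0 : r 0 = 0.

Lemma slope (x y : R) : 0 <= x -> x <= y -> 0 < y -> x * r y <= y * r x.
Proof.
move=> x0 xy y0.
have := Hconc y 0 (x / y) (ltW y0) (lexx 0) (divr_ge0 x0 (ltW y0)).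
rewrite ler_pdivrMr // mul1r => /(_ xy).
rewrite Hr0 !mulr0 !addr0 divfK ?gt_eqF //.
move=> h; rewrite (_ : x * r y = y * (x / y * r y)); last first.
  by field; rewrite gt_eqF.
by rewrite ler_pM2l.
Qed.

Lemma lim_ge (d c : R) : rderiv0 r d ->
  (\forall h \near (0:R)^'+, c <= (r h - r 0) / h) -> c <= d.
Proof.
move=> hd hn.
have <- : lim ((fun h => (r h - r 0) / h) @ (0:R)^'+) = d by exact: cvg_lim hd.
apply: limr_ge => //; by apply/cvg_ex; exists d.
Qed.

Lemma lim_le (d c : R) : rderiv0 r d ->
  (\forall h \near (0:R)^'+, (r h - r 0) / h <= c) -> d <= c.
Proof.
move=> hd hn.
have <- : lim ((fun h => (r h - r 0) / h) @ (0:R)^'+) = d by exact: cvg_lim hd.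
apply: limr_le => //; by apply/cvg_ex; exists d.
Qed.


Lemma rle_d (d x : R) : rderiv0 r d -> 0 <= x -> r x <= d * x.
Proof.
move=> hd; rewrite le0r => /orP[/eqP->|x0]; first by rewrite Hr0 mulr0.
rewrite -ler_pdivrMr //.
apply: (@lim_ge _ _ hd).
near=> h.
have h0 : 0 < h by near: h; exact: nbhs_right_gt.
have hx : h <= x by near: h; exact: nbhs_right_le.
rewrite Hr0 subr0 ler_pdivlMr // mulrAC ler_pdivrMr //. idtac.
by rewrite mulrC [r h * _]mulrC; apply: (@slope h x (ltW h0) hx x0).
Unshelve. all: by end_near.
Qed.

Lemma rpos (d t : R) : rderiv0 r d -> 0 < d -> 0 < t -> 0 < r t.
Proof.
move=> hd d0 t0; rewrite lt_neqAle Hpos ?ltW // andbT.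
apply/negP => /eqP rt0.
suff : d <= 0 by rewrite leNgt d0.
apply: (@lim_le _ _ hd).
near=> h.
have h0 : 0 < h by near: h; exact: nbhs_right_gt.
have ht : h <= t by near: h; exact: nbhs_right_le.
have : r h <= r t by apply: Hmono => //; exact: ltW.
rewrite -rt0 => rh; have : 0 <= r h by apply: Hpos; exact: ltW.
move=> rh'; have -> : r h = 0 by apply/eqP; rewrite eq_le rh rh'.
by rewrite Hr0 subrr mul0r.
Unshelve. all: by end_near.
Qed.

Lemma subadd (x y : R) : 0 <= x -> 0 <= y -> r (x + y) <= r x + r y.
Proof.
move=> x0 y0.
have [xy0|xy0] := eqVneq (x + y) 0.
  have -> : x = 0 by lra.
  have -> : y = 0 by lra.
  by rewrite addr0 Hr0 addr0.
have p : 0 < x + y by rewrite lt_neqAle eq_sym xy0 addr_ge0.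
have h1 := @slope x (x+y) x0 (ltac:(lra)) p.
have h2 := @slope y (x+y) y0 (ltac:(lra)) p.
have rxy : 0 <= r (x + y) by apply: Hpos; lra.
rewrite -(ler_pM2l p); nra.
Qed.

Lemma qfacts (d G : R) : rderiv0 r d -> 0 < d -> 0 < G ->
  let t := 2 * d / G in let q := r t / t in
  [/\ 0 < t, 0 < q, q <= d & q * t = r t].
Proof.
move=> hd d0 G0 t q.
have t0 : 0 < t by rewrite /t divr_gt0 // mulr_gt0.
have rt0 : 0 < r t := @rpos d t hd d0 t0.
split => //; first by rewrite /q divr_gt0.
  by rewrite /q ler_pdivrMr //; exact: (@rle_d d t hd (ltW t0)).
by rewrite /q divfK // gt_eqF.
Qed.

Lemma off_coord (d G a : R) : rderiv0 r d -> 0 < d -> 0 < G -> 0 <= a ->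
  (r (2 * d / G) / (2 * d / G)) * a <= r a + G * a ^+ 2 / 2.
Proof.
move=> hd d0 G0 a0.
have [t0 q0 qd qt] := @qfacts d G hd d0 G0.
set t := 2 * d / G in t0 q0 qd qt *; set q := r t / t in q0 qd qt *.
have Gt : G * t = 2 * d by rewrite /t mulrC divfK // gt_eqF.
have ra0 : 0 <= r a by exact: Hpos.
have [aLt|tLa] := leP a t.
  have := @slope a t a0 aLt t0; rewrite -qt => h.
  have : q * a <= r a by nra.
  nra.
have h1 : G * t <= G * a by rewrite ler_pM2l // ltW.
have : d * a <= G * a ^+ 2 / 2.
  rewrite ler_pdivlMr //; nra.
nra.
Qed.

Lemma on_coord (d G xi a : R) : rderiv0 r d -> 0 < d -> 0 < G -> 1 <= xi -> 0 <= a ->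
  (r (2 * d / G) / (2 * d / G)) * a + xi * r a - G * a ^+ 2 / 2 <=
  (r (2 * d / G) / (2 * d / G)) * (2 * xi * (1 + xi) * d / G).
Proof.
move=> hd d0 G0 xi1 a0.
have [t0 q0 qd qt] := @qfacts d G hd d0 G0.
have Gt : G * (2 * d / G) = 2 * d by rewrite mulrC divfK // gt_eqF.
set t := 2 * d / G in t0 q0 qd qt Gt *; set q := r t / t in q0 qd qt *.
have -> : q * (2 * xi * (1 + xi) * d / G) = q * t * (xi * (1 + xi)).
  by rewrite /t; field; rewrite gt_eqF.
have ra0 : 0 <= r a by exact: Hpos.
have [aLt|tLa] := leP a t.
  have := Hmono a t a0 aLt; rewrite -qt => h.
  have h1 : q * a <= q * t by rewrite ler_pM2l.
  have h2 : xi * r a <= xi * (q * t) by rewrite ler_pM2l //; lra.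
  have qt0 : 0 < q * t by exact: mulr_gt0.
  have h3 : q * t * (1 + xi) <= q * t * (xi * (1 + xi)) by rewrite ler_pM2l //; nra.
  have h4 : 0 <= G * a ^+ 2 / 2 by apply: divr_ge0 => //; apply: mulr_ge0; [exact: ltW|exact: sqr_ge0].
  lra.
have := @slope t a (ltW t0) (ltW tLa) (lt_trans t0 tLa); rewrite -qt => h.
have hra : r a <= q * a by nra.
have sq : 0 <= (q * (1 + xi) - G * a) ^+ 2 by exact: sqr_ge0.
have : q * (1 + xi) * a - G * a ^+ 2 / 2 <= q ^+ 2 * (1 + xi) ^+ 2 / (2 * G).
  rewrite ler_pdivlMr ?mulr_gt0 //; nra.
have : q ^+ 2 * (1 + xi) ^+ 2 / (2 * G) <= q * t * (xi * (1 + xi)).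
  rewrite ler_pdivrMr ?mulr_gt0 //.
  have -> : q * t * (xi * (1 + xi)) * (2 * G) = q * (1 + xi) * (4 * d * xi).
    rewrite (_ : q * t * (xi * (1 + xi)) * (2 * G) = q * (xi * (1 + xi)) * 2 * (G * t)); last by ring.
    by rewrite Gt; ring.
  have hq : q * (1 + xi) <= 4 * d * xi by nra.
  have p1 : 0 < q * (1 + xi) by apply: mulr_gt0 => //; lra.
  rewrite (_ : q ^+ 2 * (1 + xi) ^+ 2 = q * (1 + xi) * (q * (1 + xi))); last by ring.
  by rewrite ler_pM2l.
nra.
Qed.

End H.

Lemma norm2_sq (R : realType) k (v : 'cV[R]_k) : norm2 v ^+ 2 = \sum_i (v i 0) ^+ 2.
Proof. by rewrite /norm2 sqr_sqrtr // sumr_ge0 // => i _; exact: sqr_ge0. Qed.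

Lemma sq_expand (R : realType) k (w x : 'cV[R]_k) :
  \sum_i ((w - x) i 0) ^+ 2 = \sum_i (w i 0) ^+ 2 - 2 * dotv w x + \sum_i (x i 0) ^+ 2.
Proof.
rewrite /dotv mulr_sumr -sumrB -big_split /=; apply: eq_bigr => i _.
rewrite !mxE; ring.
Qed.

Theorem theorem8 (R : realType) (n m : nat) (Z : 'M[R]_(n, m)) (w : 'cV[R]_n)
  (theta_star : 'cV[R]_m) (rho : R -> R -> R) (lam : R) (delta : R) (d : R)
  (thetahat : 'cV[R]_m) :
  let y := Z *m theta_star + w in
  let xi := (1 + delta) / (1 - delta) in
  let obj := fun theta : 'cV[R]_m =>
    (2 * n%:R)^-1 * (norm2 (y - Z *m theta)) ^+ 2 + pen (rho lam) theta in
  condR rho -> 0 < lam ->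
  rderiv0 (rho lam) d ->
  0 < delta -> delta < 1 ->
  (forall u : 'cV[R]_m,
     n%:R^-1 * `|dotv w (Z *m u)| <=
     delta * ((2 * n%:R)^-1 * (norm2 (Z *m u)) ^+ 2 + pen (rho lam) u)) ->
  (0 < gamma2 (rho lam) Z (supp theta_star) xi)%E ->
  (forall theta : 'cV[R]_m, obj thetahat <= obj theta) ->
  ((norm2 (thetahat - theta_star))%:E * gamma2 (rho lam) Z (supp theta_star) xi
     <= (2 * xi * d * Num.sqrt (norm0 theta_star)%:R)%:E)%E /\
  ((norm1 (thetahat - theta_star))%:E * gamma2 (rho lam) Z (supp theta_star) xi
     <= (2 * xi * (1 + xi) * d * (norm0 theta_star)%:R)%:E)%E.
Proof.
move=> y xi obj [HR _] lam0 hd dl0 dl1 hnoise hgam hmin.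
have [Hpos [Hconc [Hmono [Hr0 [d' [d'0 hd']]]]]] := HR lam lam0.
rewrite /obj in hmin. set r := rho lam in Hpos Hconc Hmono Hr0 hd' hd hnoise hgam hmin *.
have d0 : 0 < d.
  have e1 : lim ((fun h => (r h - r 0) / h) @ (0:R)^'+) = d by exact: cvg_lim hd.
  have e2 : lim ((fun h => (r h - r 0) / h) @ (0:R)^'+) = d' by exact: cvg_lim hd'.
  by rewrite -e1 e2.
have xi1 : 1 <= xi by rewrite /xi ler_pdivlMr ?subr_gt0 // mul1r; lra.
have xi0 : 0 < xi by lra.
set S := supp theta_star.
set D := thetahat - theta_star.
set s := norm0 theta_star.
have sS : s = #|S| by [].
set g := gamma2 r Z S xi in hgam *.
have [D0|Dn0] := eqVneq D 0.
  have N2 : norm2 D = 0.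
    by rewrite /norm2 big1 ?sqrtr0 // => i _; rewrite D0 mxE expr0n.
  have N1 : norm1 D = 0.
    by rewrite /norm1 big1 // => i _; rewrite D0 mxE normr0.
  rewrite N2 N1 !mul0e; split; rewrite lee_fin.
    apply: mulr_ge0; last exact: sqrtr_ge0.
    by apply: mulr_ge0; [apply: mulr_ge0; [|exact: ltW xi0]|exact: ltW d0].
  apply: mulr_ge0; last exact: ler0n.
  apply: mulr_ge0; last exact: ltW d0.
  by apply: mulr_ge0; [apply: mulr_ge0; [|exact: ltW xi0]|lra].
have Dex : forall i, D i 0 = thetahat i 0 - theta_star i 0 by move=> i; rewrite /D !mxE.
have notS : forall i, i \notin S -> theta_star i 0 = 0.
  by move=> i; rewrite inE negbK => /eqP.
set a := fun i => `|D i 0|.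
have a0 : forall i, 0 <= a i by move=> i; exact: normr_ge0.
set PS := \sum_i (if i \in S then r (a i) else 0).
set PN := \sum_i (if i \in S then 0 else r (a i)).
have hpenD : pen r D = PS + PN.
  rewrite /pen /PS /PN -big_split /=; apply: eq_bigr => i _.
  by case: (i \in S) => /=; rewrite ?addr0 ?add0r.
have hpenH : PN - PS <= pen r thetahat - pen r theta_star.
  rewrite /pen /PS /PN -!sumrB; apply: ler_sum => i _.
  case: (boolP (i \in S)) => iS.
    have h1 : `|theta_star i 0| <= `|thetahat i 0| + a i.
      rewrite /a Dex.
      have := ler_normB (thetahat i 0) (thetahat i 0 - theta_star i 0).
      by rewrite (_ : thetahat i 0 - (thetahat i 0 - theta_star i 0) = theta_star i 0) //; ring.
    have h2 := Hmono _ _ (normr_ge0 _) h1.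
    have h3 := @subadd R r Hpos Hconc Hr0 _ _ (normr_ge0 (thetahat i 0)) (a0 i).
    lra.
  by rewrite /a Dex notS // subr0 normr0 Hr0 !subr0.
have hb := hmin theta_star.
have e1 : y - Z *m thetahat = w - Z *m D by rewrite /y /D mulmxBr opprB addrCA addrA.
have e2 : y - Z *m theta_star = w by rewrite /y addrAC subrr add0r.
rewrite e1 e2 !norm2_sq sq_expand in hb.
set X := Z *m D in hb.
have hn := hnoise D; rewrite -/X norm2_sq hpenD in hn.
set sqX := \sum_i (X i 0) ^+ 2 in hb hn.
set sqw := \sum_i (w i 0) ^+ 2 in hb.
set dt := dotv w X in hb hn.
set k := n%:R^-1 in hn.
have ek : (2 * n%:R)^-1 = k / 2 by rewrite invfM mulrC.
rewrite ek in hb hn.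
have k0 : 0 <= k by rewrite /k invr_ge0.
have sqX0 : 0 <= sqX by rewrite sumr_ge0 // => i _; exact: sqr_ge0.
have hdt : k * dt <= k * `|dt| by rewrite ler_wpM2l // real_ler_norm // num_real.
have PS0 : 0 <= PS by rewrite sumr_ge0 // => i _; case: ifP => _ //; exact: Hpos.
have PN0 : 0 <= PN by rewrite sumr_ge0 // => i _; case: ifP => _ //; exact: Hpos.
have kX0 : 0 <= k * sqX by exact: mulr_ge0.
have hC : (1 - delta) * (k * sqX / 2 + PN) <= (1 + delta) * PS.
  have E0 : forall K A B C : R, K / 2 * (A - 2 * B + C) = K / 2 * A - K * B + K * C / 2 by move=> K A B C; field.
  have E1 := E0 k sqw dt sqX.
  have E2 : delta * (k / 2 * sqX + (PS + PN)) = delta * (k * sqX / 2) + delta * PS + delta * PN by move: (k) (sqX) (PS) (PN) => K A B C; field.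
  nra.
have hcone : PN <= xi * PS.
  rewrite /xi mulrAC ler_pdivlMr ?subr_gt0 // mulrC; nra.
have hconeD : cone r S xi D.
  rewrite /cone /= /penA.
  have -> : \sum_(i in ~: S) r `|D i 0| = PN.
    rewrite big_mkcond /PN; apply: eq_bigr => i _; rewrite !inE.
    by case: eqP.
  have -> : \sum_(i in S) r `|D i 0| = PS.
    by rewrite big_mkcond /PS; apply: eq_bigr => i _.
  exact: hcone.
set N := norm2 D.
have hle : (g <= (norm2 X ^+ 2 / (n%:R * N ^+ 2))%:E)%E.
  apply: ereal_inf_lbound; exists D => //.
clearbody g.
have [G [eG G0 GleV]] : exists G, [/\ g = G%:E, 0 < G & G <= norm2 X ^+ 2 / (n%:R * N ^+ 2)].
  by move: hle hgam; case: g => [G| |] //= hle hgam; exists G; split => //; rewrite -?lte_fin -?lee_fin.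
rewrite norm2_sq -/sqX in GleV.
have nN0 : 0 < n%:R * N ^+ 2.
  rewrite lt_neqAle mulr_ge0 ?sqr_ge0 // andbT; apply/negP => /eqP e.
  by move: GleV; rewrite -e invr0 mulr0 leNgt G0.
have GN : G * N ^+ 2 <= k * sqX.
  rewrite ler_pdivlMr // in GleV.
  have n0 : n%:R != 0 :> R by apply/negP => /eqP e; move: nN0; rewrite e mul0r ltxx.
  have npos : 0 < n%:R :> R by rewrite lt_neqAle eq_sym n0 ler0n.
  rewrite /k -(ler_pM2l npos).
  by rewrite mulVKf // mulrCA.
have N2a : N ^+ 2 = \sum_i a i ^+ 2.
  by rewrite /N norm2_sq; apply: eq_bigr => i _; rewrite /a real_normK // num_real.
have Npos : 0 < N.
  rewrite lt_neqAle /N sqrtr_ge0 andbT; apply/negP => /eqP e.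
  by move: nN0; rewrite /N -e expr0n mulr0 ltxx.
have hstar : G * N ^+ 2 / 2 + PN <= xi * PS.
  rewrite /xi [_ / _ * PS]mulrAC ler_pdivlMr ?subr_gt0 // mulrC.
  have : (1 - delta) * (G * N ^+ 2 / 2) <= (1 - delta) * (k * sqX / 2).
    by rewrite ler_pM2l ?subr_gt0 // ler_pM2r.
  nra.
have hPS : PS <= d * Num.sqrt s%:R * N.
  have [s0|spos] := eqVneq s 0%N.
    have S0 : S = finset.set0 by apply/eqP; rewrite -cards_eq0 -sS s0.
    rewrite /PS big1 ?s0 ?sqrtr0 ?mulr0 ?mul0r // => i _; by rewrite S0 inE.
  set c := N / Num.sqrt s%:R.
  have sq0 : 0 < Num.sqrt s%:R :> R.
    by rewrite sqrtr_gt0 ltr0n lt0n.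
  have c0 : 0 < c by rewrite divr_gt0.
  have step : forall i, (if i \in S then r (a i) else 0) <=
      d / (2 * c) * a i ^+ 2 + (if i \in S then d * c / 2 else 0).
    move=> i; have h := @rle_d R r Hconc Hr0 d (a i) hd (a0 i).
    have q0 : 0 <= d / (2 * c) * a i ^+ 2.
      by apply: mulr_ge0; [apply: divr_ge0; [exact: ltW|rewrite mulr_ge0 // ltW]|exact: sqr_ge0].
    case: ifP => _; last by rewrite addr0.
    have : d * a i <= d / (2 * c) * a i ^+ 2 + d * c / 2.
      have e : d / (2 * c) * a i ^+ 2 + d * c / 2 - d * a i = d / (2 * c) * (a i - c) ^+ 2.
        by move: (a i) => A; field; rewrite gt_eqF.
      rewrite -subr_ge0 e; apply: mulr_ge0; last exact: sqr_ge0.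
      by apply: divr_ge0; [exact: ltW|rewrite mulr_ge0 // ltW].
    lra.
  have hs : PS <= \sum_i (d / (2 * c) * a i ^+ 2 + (if i \in S then d * c / 2 else 0)).
    by apply: ler_sum => i _; exact: step.
  rewrite big_split /= -mulr_sumr -N2a -big_mkcond sumr_const -sS -[d * c / 2 *+ s]mulr_natr in hs.
  have ss : s%:R = Num.sqrt s%:R ^+ 2 :> R by rewrite sqr_sqrtr // ler0n.
  suff <- : d / (2 * c) * N ^+ 2 + d * c / 2 * s%:R = d * Num.sqrt s%:R * N by [].
  rewrite /c; move: sq0 ss; set Q := Num.sqrt s%:R => Q0 ss; rewrite ss.
  by field; rewrite !gt_eqF.
have xPS : xi * PS <= xi * (d * Num.sqrt s%:R * N) by rewrite ler_pM2l.
split.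
  rewrite eG -EFinM lee_fin.
  have h1 : G * N ^+ 2 / 2 <= xi * (d * Num.sqrt s%:R * N) by lra.
  rewrite -(ler_pM2r Npos).
  have -> : 2 * xi * d * Num.sqrt s%:R * N = 2 * (xi * (d * Num.sqrt s%:R * N)).
    by move: (Num.sqrt _) => Q; ring.
  have -> : N * G * N = 2 * (G * N ^+ 2 / 2) by move: (N) (G) => A B; field.
  by rewrite ler_pM2l.
have [t0 q0 qd qt] := @qfacts R r Hpos Hconc Hmono Hr0 d G hd d0 G0.
set q := r (2 * d / G) / (2 * d / G) in q0 qd qt *.
set B := 2 * xi * (1 + xi) * d / G.
have step1 : forall i, q * a i <= (if i \in S then q * B else 0) +
    ((if i \in S then 0 else r (a i)) - xi * (if i \in S then r (a i) else 0)) +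
    G * a i ^+ 2 / 2.
  move=> i; case: ifP => _.
    have := @on_coord R r Hpos Hconc Hmono Hr0 d G xi (a i) hd d0 G0 xi1 (a0 i).
    rewrite -/q -/B; lra.
  have := @off_coord R r Hpos Hconc Hmono Hr0 d G (a i) hd d0 G0 (a0 i).
  rewrite -/q; lra.
have hs : \sum_i q * a i <= \sum_i ((if i \in S then q * B else 0) +
    ((if i \in S then 0 else r (a i)) - xi * (if i \in S then r (a i) else 0)) +
    G * a i ^+ 2 / 2).
  by apply: ler_sum => i _; exact: step1.
have E3 : \sum_i (if i \in S then q * B else 0) = q * B * s%:R.
  by rewrite -big_mkcond sumr_const -sS -[q * B *+ s]mulr_natr.
have E4 : \sum_i ((if i \in S then 0 else r (a i)) - xi * (if i \in S then r (a i) else 0))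
    = PN - xi * PS by rewrite sumrB -mulr_sumr.
have E5 : \sum_i G * a i ^+ 2 / 2 = G * N ^+ 2 / 2 by rewrite N2a mulr_sumr mulr_suml.
rewrite big_split /= big_split /= E3 E4 E5 -mulr_sumr in hs.
have hn1 : q * norm1 D <= q * (B * s%:R) by rewrite /norm1; lra.
rewrite ler_pM2l // in hn1.
rewrite eG -EFinM lee_fin.
have -> : 2 * xi * (1 + xi) * d * s%:R = (B * s%:R) * G.
  by rewrite /B; move: (xi) (s%:R) => A C; field; rewrite gt_eqF.
by rewrite ler_pM2r.
Qed.
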